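(* For every graph $G$, any graph obtained from $G$ by subdividing every edge at least twice (i.e. replacing each edge by a path with at least two internal vertices, the numbers of internal vertices possibly differing between edges) belongs to 3-CBU.
   Context: Let $e_1,e_2,e_3$ be the standard basis of $\mathbb{R}^3$. A graph belongs to 3-CBU if one can assign to each vertex an axis-parallel box (product of 3 closed intervals of positive length) in $\mathbb{R}^3$ such that the boxes have pairwise disjoint interiors, two distinct vertices are adjacent iff their boxes intersect, and any two intersecting boxes intersect in a 2-dimensional box orthogonal to $e_1$. *)

(* Defs.v *)
From Stdlib Require Import Reals.
From mathcomp Require Import all_boot.

Set Implicit Arguments.
Unset Strict Implicit.
Unset Printing Implicit Defensive.
Local Open Scope R_scope.

(* Points of R^3 are functions nat -> R, only coordinates 0,1,2 matter
   (coordinate 0 corresponds to e_1). *)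
Definition point := nat -> R.

Record box := Box { lo : nat -> R; hi : nat -> R }.

Definition box_ok (B : box) : Prop :=
  forall j : nat, (j < 3)%N -> (lo B j < hi B j).

Definition in_box (B : box) (p : point) : Prop :=
  forall j : nat, (j < 3)%N -> (lo B j <= p j <= hi B j).

Definition in_interior (B : box) (p : point) : Prop :=
  forall j : nat, (j < 3)%N -> (lo B j < p j < hi B j).

Definition boxes_intersect (B B' : box) : Prop :=
  exists p : point, in_box B p /\ in_box B' p.

Definition inter_2dim_orth_e1 (B B' : box) : Prop :=
  exists c a1 b1 a2 b2 : R, (a1 < b1) /\ (a2 < b2) /\
    forall p : point, (in_box B p /\ in_box B' p) <->
      (p 0%N = c /\ (a1 <= p 1%N <= b1) /\ (a2 <= p 2%N <= b2)).

Definition CBU3 (V : Type) (adj : V -> V -> Prop) : Prop :=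
  exists B : V -> box,
    (forall v, box_ok (B v)) /\
    (forall u v, u <> v -> ~ (exists p, in_interior (B u) p /\ in_interior (B v) p)) /\
    (forall u v, u <> v -> (adj u v <-> boxes_intersect (B u) (B v))) /\
    (forall u v, u <> v -> boxes_intersect (B u) (B v) -> inter_2dim_orth_e1 (B u) (B v)).

(* Each edge {u,v} is oriented so that
   enum_rank u < enum_rank v, and replaced by the path
   u - (u,v,1) - (u,v,2) - ... - (u,v,k u v) - v
   with k u v internal vertices. *)
Section Subdiv.
Variables (T : finType) (e : rel T) (k : T -> T -> nat).

Definition sub_raw := (T + (T * T * nat))%type.

Definition sub_valid (x : sub_raw) : bool :=
  match x with
  | inl _ => true
  | inr (u, v, i) => [&& e u v, (enum_rank u < enum_rank v)%N & (0 < i <= k u v)%N]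
  end.

Definition sub_vertex := { x : sub_raw | sub_valid x }.

Definition sub_step (x y : sub_raw) : Prop :=
  match x, y with
  | inl a, inr (u, v, i) => a = u /\ i = 1%N
  | inr (u, v, i), inr (u', v', j) => u = u' /\ v = v' /\ j = i.+1
  | inr (u, v, i), inl b => b = v /\ i = k u v
  | _, _ => False
  end.

Definition sub_adj (x y : sub_vertex) : Prop :=
  sub_step (proj1_sig x) (proj1_sig y) \/ sub_step (proj1_sig y) (proj1_sig x).
End Subdiv.

(* Main.v *)
Require Import Defs.
From Stdlib Require Import Reals Lra Classical.
From mathcomp Require Import all_boot.
From mathcomp Require Import zify.

Set Implicit Arguments.
Unset Strict Implicit.
Unset Printing Implicit Defensive.

Local Open Scope R_scope.

Definition touch (B B' : box) : Prop :=
  hi B 0%N = lo B' 0%N /\ lo B 1%N < hi B' 1%N /\ lo B' 1%N < hi B 1%N /\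
  lo B 2%N < hi B' 2%N /\ lo B' 2%N < hi B 2%N.

Definition sep (B B' : box) : Prop :=
  hi B 0%N < lo B' 0%N \/ hi B' 0%N < lo B 0%N \/ hi B 1%N < lo B' 1%N \/
  hi B' 1%N < lo B 1%N \/ hi B 2%N < lo B' 2%N \/ hi B' 2%N < lo B 2%N.

Lemma sep_sym B B' : sep B B' -> sep B' B.
Proof. unfold sep; tauto. Qed.

Lemma sep_nointer B B' : sep B B' -> ~ boxes_intersect B B'.
Proof.
move=> hs [p [h1 h2]].
have a0 := h1 0%N isT; have a1 := h1 1%N isT; have a2 := h1 2%N isT.
have b0 := h2 0%N isT; have b1 := h2 1%N isT; have b2 := h2 2%N isT.
unfold sep in hs; lra.
Qed.

Lemma sep_nointerior B B' : sep B B' ->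
  ~ (exists p, in_interior B p /\ in_interior B' p).
Proof.
move=> hs [p [h1 h2]].
have a0 := h1 0%N isT; have a1 := h1 1%N isT; have a2 := h1 2%N isT.
have b0 := h2 0%N isT; have b1 := h2 1%N isT; have b2 := h2 2%N isT.
unfold sep in hs; lra.
Qed.

Lemma touch_nointerior B B' : touch B B' ->
  ~ (exists p, in_interior B p /\ in_interior B' p).
Proof.
move=> [ht _] [p [h1 h2]].
have a0 := h1 0%N isT; have b0 := h2 0%N isT; lra.
Qed.

Lemma touch_2dim B B' : box_ok B -> box_ok B' -> touch B B' ->
  inter_2dim_orth_e1 B B'.
Proof.
move=> ok ok' [h0 [h1 [h2 [h3 h4]]]].
have o0 := ok 0%N isT; have o0' := ok' 0%N isT.
have o1 := ok 1%N isT; have o1' := ok' 1%N isT.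
have o2 := ok 2%N isT; have o2' := ok' 2%N isT.
exists (hi B 0%N), (Rmax (lo B 1%N) (lo B' 1%N)), (Rmin (hi B 1%N) (hi B' 1%N)),
  (Rmax (lo B 2%N) (lo B' 2%N)), (Rmin (hi B 2%N) (hi B' 2%N)).
split; [|split].
- unfold Rmax, Rmin; repeat destruct Rle_dec; lra.
- unfold Rmax, Rmin; repeat destruct Rle_dec; lra.
- move=> p; split.
  + move=> [a b].
    have a0 := a 0%N isT; have a1 := a 1%N isT; have a2 := a 2%N isT.
    have b0 := b 0%N isT; have b1 := b 1%N isT; have b2 := b 2%N isT.
    unfold Rmax, Rmin; repeat destruct Rle_dec; lra.
  + move=> [c [d f]]; split=> j hj;
    (destruct j as [|[|[|j]]]; [ | | | discriminate]);
    revert c d f; unfold Rmax, Rmin; repeat destruct Rle_dec; lra.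
Qed.

Lemma inter_sym B B' : inter_2dim_orth_e1 B B' -> inter_2dim_orth_e1 B' B.
Proof.
move=> [c [a1 [b1 [a2 [b2 [h1 [h2 h]]]]]]].
exists c, a1, b1, a2, b2; split; [|split] => // p.
rewrite -h; tauto.
Qed.

Lemma touch_inter B B' : box_ok B -> box_ok B' -> touch B B' ->
  boxes_intersect B B'.
Proof.
move=> ok ok' ht.
have [c [a1 [b1 [a2 [b2 [h1 [h2 h]]]]]]] := touch_2dim ok ok' ht.
exists (fun j => match j with 0%N => c | 1%N => a1 | _ => a2 end).
apply/h; split; [|split]=> //; lra.
Qed.

Lemma INR_addn m n : INR (m + n)%N = INR m + INR n.
Proof. exact: plus_INR. Qed.

Lemma INR_mono m n : (m <= n)%N -> INR m <= INR n.
Proof. by move/leP; apply: le_INR. Qed.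

Section Construction.
Variables (T : finType) (e : rel T) (k : T -> T -> nat).
Hypotheses (esym : symmetric e) (eirr : irreflexive e)
  (k2 : forall u v : T, e u v -> (2 <= k u v)%N).

Definition rk (w : T) : nat := enum_rank w.
Definition NN : nat := #|T|.
Definition KK : nat := \max_(p : T * T) k p.1 p.2.
Definition SS : nat := (KK + 2)%N.
Definition X w : R := INR (rk w * SS).
Definition Y w : R := INR (rk w).
Definition ZZ : R := INR (2 * NN * NN).
Definition zm u v : R := INR (2 * (rk u * NN + rk v)).

Definition vbox w : box :=
  Box (fun j => match j with 0%N => X w | 1%N => Y w | _ => 0 end)
      (fun j => match j with 0%N => X w + 1 | 1%N => Y w + 1 | _ => ZZ end).

Definition ebox u v i : box :=
  Box (fun j => match j with
        | 0%N => if i == 1%N then X u + 1 else X v - INR (k u v) + INR i - 1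
        | 1%N => Y u + /4
        | _ => zm u v end)
      (fun j => match j with
        | 0%N => X v - INR (k u v) + INR i
        | 1%N => if i == 1%N then Y u + 3/4 else Y v + 3/4
        | _ => zm u v + 1 end).

Definition Braw (x : sub_raw T) : box :=
  match x with inl w => vbox w | inr (u, v, i) => ebox u v i end.

Lemma rk_lt w : (rk w < NN)%N.
Proof. exact: ltn_ord. Qed.

Lemma rk_inj u v : rk u = rk v -> u = v.
Proof. by move=> h; apply: enum_rank_inj; apply: ord_inj. Qed.

Lemma X_lt u v : (rk u < rk v)%N -> X u + INR SS <= X v.
Proof.
move=> h; rewrite /X -INR_addn; apply: INR_mono.
have := leq_mul h (leqnn SS); rewrite mulSn addnC.
done.
Qed.

Lemma Y_lt u v : (rk u < rk v)%N -> Y u + 1 <= Y v.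
Proof.
move=> h; rewrite /Y -(INR_addn _ 1); apply: INR_mono; by rewrite addn1.
Qed.

Lemma SS_eq : INR SS = INR KK + 2.
Proof. rewrite /SS INR_addn; simpl; lra. Qed.

Lemma k_le u v : INR (k u v) <= INR KK.
Proof. apply: INR_mono; exact: (leq_bigmax (F := fun p : T * T => k p.1 p.2) (u, v)). Qed.

Lemma k_ge u v : e u v -> 2 <= INR (k u v).
Proof. move=> h; have := INR_mono (k2 h); simpl; lra. Qed.

Lemma zm_bounds u v : 0 <= zm u v /\ zm u v + 1 <= ZZ.
Proof.
split; first by apply: pos_INR.
rewrite /zm /ZZ -(INR_addn _ 1); apply: INR_mono.
have := rk_lt u; have := rk_lt v; nia.
Qed.

Lemma zm_sep u v u' v' : (u, v) <> (u', v') ->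
  zm u v + 1 < zm u' v' \/ zm u' v' + 1 < zm u v.
Proof.
move=> hne.
have hm : (rk u * NN + rk v)%N <> (rk u' * NN + rk v')%N.
  move=> h; apply: hne.
  have hN : (0 < NN)%N by have := rk_lt u; lia.
  have h1 : rk u = rk u'.
    have e1 := divnMDl (rk u) (rk v) hN; have e2 := divnMDl (rk u') (rk v') hN.
    rewrite (divn_small (rk_lt v)) addn0 in e1.
    rewrite (divn_small (rk_lt v')) addn0 in e2.
    by rewrite -e1 -e2 h.
  have h2 : rk v = rk v' by move: h; rewrite h1; lia.
  by rewrite (rk_inj h1) (rk_inj h2).
case: (ltngtP (rk u * NN + rk v) (rk u' * NN + rk v')) => h.
- left; rewrite /zm -(INR_addn _ 1); apply: lt_INR; apply/ltP; lia.
- right; rewrite /zm -(INR_addn _ 1); apply: lt_INR; apply/ltP; lia.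
- by case: hm.
Qed.

Lemma KK_ge0 : 0 <= INR KK.
Proof. exact: pos_INR. Qed.

Lemma vbox_ok w : box_ok (vbox w).
Proof.
have [z0 z1] := zm_bounds w w.
move=> j hj; destruct j as [|[|[|j]]] => //=; lra.
Qed.

Lemma ebox_ok u v i : e u v -> (rk u < rk v)%N -> (0 < i)%N -> box_ok (ebox u v i).
Proof.
move=> he hr hi.
have hX := X_lt hr; have hY := Y_lt hr; have := SS_eq; have := k_le u v.
have := k_ge he; have := KK_ge0.
move=> *.
move=> j hj; destruct j as [|[|[|j]]] => //=.
- case: (i =P 1%N) => [->|_] /=; lra.
- case: (i =P 1%N) => _ /=; lra.
- lra.
Qed.

Lemma Braw_ok x : sub_valid e k x -> box_ok (Braw x).
Proof.
case: x => [w|[[u v] i]] /=; first by move=> _; apply: vbox_ok.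
move/and3P => [he hr /andP [hi _]]; exact: ebox_ok.
Qed.

Lemma step_touch x y : sub_valid e k x -> sub_valid e k y -> sub_step k x y ->
  touch (Braw x) (Braw y).
Proof.
case: x => [a|[[u v] i]]; case: y => [b|[[u' v'] j]] /=.
- by move=> _ _ [].
- move=> _ /and3P [he hr /andP [hj hjk]] [-> ->].
  have hY := Y_lt hr; have [z0 z1] := zm_bounds u' v'.
  rewrite /touch /=; lra.
- move/and3P=> [he hr /andP [hi hik]] _ [-> ->].
  have hY := Y_lt hr; have [z0 z1] := zm_bounds u v.
  have := k2 he => h2.
  have hb : (k u v == 1%N) = false by apply/eqP; lia.
  rewrite /touch /= hb; lra.
- move/and3P=> [he hr /andP [hi hik]] _ [<- [<- ->]].
  have hY := Y_lt hr; have [z0 z1] := zm_bounds u v.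
  have hb : (i.+1 == 1%N) = false by apply/eqP; lia.
  rewrite /touch /ebox; cbn [Defs.lo Defs.hi]; rewrite hb S_INR.
  case: (i =P 1%N) => [->|_] /=; lra.
Qed.

Lemma ve_sep a u v i : sub_valid e k (inr (u, v, i)) ->
  ~ (a = u /\ i = 1%N) -> ~ (a = v /\ i = k u v) -> sep (vbox a) (ebox u v i).
Proof.
move=> /and3P [he hr /andP [hi hik]] n1 n2.
have hY := Y_lt hr; have hX := X_lt hr.
have := SS_eq; have := k_le u v; have := k_ge he; have := KK_ge0.
have hiR := INR_mono hik; have hi1 := INR_mono hi.
move=> *.
case: (i =P 1%N) => [hi1'|hi1'].
- subst i; rewrite /sep /=.
  case: (eqVneq a u) => [hau|hau]; first by case: n1.
  case: (eqVneq a v) => [hav|hav]; first by subst; lra.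
  case: (ltngtP (rk a) (rk u)) => hau'.
  + have := X_lt hau'; lra.
  + case: (ltngtP (rk a) (rk v)) => hav'.
    * have := Y_lt hau'; lra.
    * have := X_lt hav'; lra.
    * by case/eqP: hav; apply: rk_inj.
  + by case/eqP: hau; apply: rk_inj.
- have hb : (i == 1%N) = false by apply/eqP.
  rewrite /sep /= hb.
  have hi2 : (2 <= i)%N by lia.
  have := INR_mono hi2 => hi2R; simpl in hi2R.
  case: (eqVneq a v) => [hav|hav].
  + subst a.
    have hne : i <> k u v by move=> h; apply: n2.
    have hik' : (i.+1 <= k u v)%N by lia.
    have := INR_mono hik'; rewrite S_INR; lra.
  + case: (ltngtP (rk a) (rk v)) => hav'.
    * have := X_lt hav'; lra.
    * have := X_lt hav'; lra.
    * by case/eqP: hav; apply: rk_inj.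
Qed.

Lemma ee_sep u v i j : sub_valid e k (inr (u, v, i)) -> (i.+2 <= j)%N ->
  sep (ebox u v i) (ebox u v j).
Proof.
move=> /and3P [he hr /andP [hi hik]] hij.
have hb : (j == 1%N) = false by apply/eqP; lia.
have := INR_mono hij; rewrite !S_INR => h.
rewrite /sep /= hb; lra.
Qed.

Lemma nostep_sep x y : sub_valid e k x -> sub_valid e k y -> x <> y ->
  ~ sub_step k x y -> ~ sub_step k y x -> sep (Braw x) (Braw y).
Proof.
case: x => [a|[[u v] i]]; case: y => [b|[[u' v'] j]] /= hx hy hne n1 n2.
- have hab : a <> b by move=> h; apply: hne; rewrite h.
  have := SS_eq; have := KK_ge0 => *.
  rewrite /sep /=.
  case: (ltngtP (rk a) (rk b)) => h.
  + have := X_lt h; lra.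
  + have := X_lt h; lra.
  + by case: hab; apply: rk_inj.
- by apply: ve_sep.
- by apply: sep_sym; apply: ve_sep.
- case: (eqVneq (u, v) (u', v')) => [[hu hv]|huv].
  + subst u' v'.
    have hij : i <> j by move=> h; apply: hne; rewrite h.
    case: (ltngtP i j) => h.
    * apply: ee_sep => //.
      have : j <> i.+1 by move=> h'; apply: n1.
      lia.
    * apply: sep_sym; apply: ee_sep => //.
      have : i <> j.+1 by move=> h'; apply: n2.
      lia.
    * by case: hij.
  + have huv' : (u, v) <> (u', v') by move=> h; rewrite h eqxx in huv.
    have := zm_sep huv'; rewrite /sep /=; lra.
Qed.

End Construction.

Theorem mainTheorem18 (T : finType) (e : rel T) (k : T -> T -> nat) :
  symmetric e -> irreflexive e ->
  (forall u v : T, e u v -> (2 <= k u v)%N) ->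
  CBU3 (@sub_adj T e k).
Proof.
move=> hs hirr hk.
exists (fun x => Braw k (proj1_sig x)).
have okB : forall x : sub_vertex e k, box_ok (Braw k (proj1_sig x)).
  by move=> [x hx]; apply: (Braw_ok hk).
have dich : forall x y : sub_vertex e k, x <> y ->
   (sub_adj x y /\ (touch (Braw k (proj1_sig x)) (Braw k (proj1_sig y)) \/
                    touch (Braw k (proj1_sig y)) (Braw k (proj1_sig x))))
   \/ (~ sub_adj x y /\ sep (Braw k (proj1_sig x)) (Braw k (proj1_sig y))).
  move=> [x hx] [y hy] hne; rewrite /sub_adj /=.
  have hne' : x <> y.
    move=> h; apply: hne; subst y; congr exist; exact: bool_irrelevance.
  case: (classic (sub_step k x y)) => h1.
    by left; split; [left | left; apply: (step_touch hk)].
  case: (classic (sub_step k y x)) => h2.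
    by left; split; [right | right; apply: (step_touch hk)].
  right; split; first by case.
  exact: (nostep_sep hk).
split; [exact: okB|split; [|split]].
- move=> u v huv; case: (dich u v huv) => [[_ [h|h]]|[_ h]].
  + exact: touch_nointerior.
  + by move=> [p [h1 h2]]; apply: (touch_nointerior h); exists p.
  + exact: sep_nointerior.
- move=> u v huv; case: (dich u v huv) => [[ha [h|h]]|[ha h]].
  + by split=> // _; apply: touch_inter.
  + split=> // _; have [p [h1 h2]] := touch_inter (okB v) (okB u) h.
    by exists p.
  + by split=> // /sep_nointer.
- move=> u v huv hint; case: (dich u v huv) => [[ha [h|h]]|[ha h]].
  + exact: touch_2dim.
  + by apply: inter_sym; apply: touch_2dim.
  + by case: (sep_nointer h).
Qed.
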